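(* Let $R$ be a commutative Noetherian ring. Let $\mathcal{A}$ be an essentially small $R$-linear abelian category with the following properties: - every object of $\mathcal{A}$ is Noetherian; - $\mathcal{A}$ is $\operatorname{Hom}$-finite over $R$; - every decreasing sequence of subobjects of an object of $\mathcal{A}$ has an intersection in $\mathcal{A}$. If $\mathcal{A}$ has a weak generator $G$, then every object of $\mathcal{A}$ is Artinian. In particular, $\mathcal{A}$ is a length category.
   Context: An object is Artinian (resp. Noetherian) if every descending (resp. ascending) chain of its subobjects becomes stationary. An abelian category is a length category if every object is both Artinian and Noetherian. $\mathcal{A}$ is $\operatorname{Hom}$-finite over $R$ if it is $R$-linear and $\operatorname{Hom}(A,B)$ is a finite length $R$-module for all $A,B\in\mathcal{A}$. An object $G$ is a weak generator if $\operatorname{Hom}(G,E)=0$ implies $E\cong0$. *)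

(* Defs.v *)
From HB Require Import structures.
From mathcomp Require Import all_boot all_order all_algebra.
Set Implicit Arguments. Unset Strict Implicit. Unset Printing Implicit Defensive.
Import GRing.Theory.
Local Open Scope ring_scope.

Definition is_ideal (R : comPzRingType) (I : R -> Prop) : Prop :=
  I 0 /\ forall (a x y : R), I x -> I y -> I (a * x + y).

Definition noetherian_ring (R : comPzRingType) : Prop :=
  forall I : nat -> R -> Prop,
    (forall n, is_ideal (I n)) ->
    (forall n x, I n x -> I n.+1 x) ->
    exists N, forall n, (N <= n)%N -> forall x, I n x -> I N x.

Definition is_submod (R : comPzRingType) (M : lmodType R) (P : M -> Prop) : Prop :=
  P 0 /\ forall (a : R) (x y : M), P x -> P y -> P (a *: x + y).

Definition finite_length (R : comPzRingType) (M : lmodType R) : Prop :=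
  exists (n : nat) (c : nat -> M -> Prop),
    (forall x, c 0%N x <-> x = 0) /\
    (forall x, c n x) /\
    (forall i, (i < n)%N ->
       [/\ is_submod (c i), is_submod (c i.+1),
           (forall x, c i x -> c i.+1 x),
           (exists x, c i.+1 x /\ ~ c i x) &
           (forall N : M -> Prop, is_submod N ->
              (forall x, c i x -> N x) -> (forall x, N x -> c i.+1 x) ->
              (forall x, N x -> c i x) \/ (forall x, c i.+1 x -> N x))]).

Record lincat (R : comPzRingType) := LinCat {
  Obj : Type;
  Hom : Obj -> Obj -> lmodType R;
  comp : forall A B C : Obj, Hom B C -> Hom A B -> Hom A C;
  idm : forall A : Obj, Hom A A;
  compA : forall A B C D (h : Hom C D) (g : Hom B C) (f : Hom A B),
      comp h (comp g f) = comp (comp h g) f;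
  comp1m : forall A B (f : Hom A B), comp (idm B) f = f;
  compm1 : forall A B (f : Hom A B), comp f (idm A) = f;
  comp_linr : forall A B C (g : Hom B C) (a : R) (f f' : Hom A B),
      comp g (a *: f + f') = a *: comp g f + comp g f';
  comp_linl : forall A B C (f : Hom A B) (a : R) (g g' : Hom B C),
      comp (a *: g + g') f = a *: comp g f + comp g' f
}.

Arguments Obj {R}.
Arguments Hom {_} _ _ _.
Arguments comp {_ _ _ _ _}.
Arguments idm {_ _ _}.

Section Abelian.
Variables (R : comPzRingType) (C : lincat R).
Local Notation Hom := (Hom C).
Local Notation Obj := (Obj C).

Definition mono (A B : Obj) (m : Hom A B) : Prop :=
  forall X (u v : Hom X A), comp m u = comp m v -> u = v.
Definition epi (A B : Obj) (e : Hom A B) : Prop :=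
  forall X (u v : Hom B X), comp u e = comp v e -> u = v.

Definition zero_obj (Z : Obj) : Prop :=
  forall X : Obj, (forall f g : Hom Z X, f = g) /\ (forall f g : Hom X Z, f = g).

Definition is_kernel (A B K : Obj) (f : Hom A B) (k : Hom K A) : Prop :=
  comp f k = 0 /\
  forall X (x : Hom X A), comp f x = 0 -> exists! u : Hom X K, comp k u = x.

Definition is_cokernel (A B Q : Obj) (f : Hom A B) (q : Hom B Q) : Prop :=
  comp q f = 0 /\
  forall X (x : Hom B X), comp x f = 0 -> exists! u : Hom Q X, comp u q = x.

Definition abelian : Prop :=
  (exists Z, zero_obj Z) /\
  (forall A B : Obj, exists (P : Obj) (i1 : Hom A P) (i2 : Hom B P)
       (p1 : Hom P A) (p2 : Hom P B),
     [/\ comp p1 i1 = idm, comp p2 i2 = idm, comp p1 i2 = 0, comp p2 i1 = 0 &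
         comp i1 p1 + comp i2 p2 = idm]) /\
  (forall A B (f : Hom A B), exists K (k : Hom K A), is_kernel f k) /\
  (forall A B (f : Hom A B), exists Q (q : Hom B Q), is_cokernel f q) /\
  (forall S A (m : Hom S A), mono m -> exists B (f : Hom A B), is_kernel f m) /\
  (forall A Q (e : Hom A Q), epi e -> exists B (f : Hom B A), is_cokernel f e).

Definition subobj_le (A S T : Obj) (m : Hom S A) (n : Hom T A) : Prop :=
  exists u : Hom S T, comp n u = m.

Definition artinian_obj (A : Obj) : Prop :=
  forall (S : nat -> Obj) (m : forall k, Hom (S k) A),
    (forall k, mono (m k)) ->
    (forall k, subobj_le (m k.+1) (m k)) ->
    exists N, forall k, (N <= k)%N -> subobj_le (m k) (m k.+1).

Definition noetherian_obj (A : Obj) : Prop :=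
  forall (S : nat -> Obj) (m : forall k, Hom (S k) A),
    (forall k, mono (m k)) ->
    (forall k, subobj_le (m k) (m k.+1)) ->
    exists N, forall k, (N <= k)%N -> subobj_le (m k.+1) (m k).

Definition hom_finite : Prop :=
  forall A B : Obj, finite_length (Hom A B).

Definition decreasing_intersections : Prop :=
  forall (A : Obj) (S : nat -> Obj) (m : forall k, Hom (S k) A),
    (forall k, mono (m k)) ->
    (forall k, subobj_le (m k.+1) (m k)) ->
    exists (I : Obj) (i : Hom I A),
      [/\ mono i, (forall k, subobj_le i (m k)) &
          (forall X (j : Hom X A), mono j ->
             (forall k, subobj_le j (m k)) -> subobj_le j i)].

Definition weak_generator (G : Obj) : Prop :=
  forall E : Obj, (forall f : Hom G E, f = 0) -> zero_obj E.

Definition length_category : Prop :=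
  forall A : Obj, artinian_obj A /\ noetherian_obj A.

End Abelian.

(* Main.v *)
Require Import Defs.
From HB Require Import structures.
From mathcomp Require Import all_boot all_order all_algebra.
From Stdlib Require Import Classical ClassicalDescription.
Set Implicit Arguments. Unset Strict Implicit. Unset Printing Implicit Defensive.
Import GRing.Theory.

Lemma stab (a : nat -> nat) : (forall k, a k.+1 <= a k) ->
  exists N, forall k, N <= k -> a k = a N.
Proof.
have mono : forall a : nat -> nat, (forall k, a k.+1 <= a k) ->
    forall j k, j <= k -> a k <= a j.
  move=> b Hb j k /subnK <-; elim: (k - j) => //= d IH.
  by rewrite addSn; apply: leq_trans (Hb _) IH.
move=> Ha.
suff: forall m (a : nat -> nat), a 0 <= m -> (forall k, a k.+1 <= a k) ->
   exists N, forall k, N <= k -> a k = a N by move/(_ (a 0) a (leqnn _) Ha).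
elim=> [|m IH] b Hb0 Hb.
  exists 0 => k _; have h := mono b Hb 0 k (leq0n k).
  apply/eqP; rewrite eqn_leq h /=; apply: leq_trans Hb0 _; exact: leq0n.
case: (classic (exists k, b k < b 0)) => [[k0 Hk0]|Hn].
  have H1 : b (k0 + 0) <= m by rewrite addn0 -ltnS; apply: leq_trans Hk0 Hb0.
  have H2 : forall k, b (k0 + k.+1) <= b (k0 + k).
    by move=> k; rewrite addnS; apply: Hb.
  have [N' HN'] := IH (fun j => b (k0 + j)) H1 H2.
  exists (k0 + N') => k Hk.
  have Hk0k : k0 <= k by apply: leq_trans (leq_addr _ _) Hk.
  have := HN' (k - k0); rewrite subnKC //; apply.
  by rewrite leq_subRL.
exists 0 => k _; apply/eqP; rewrite eqn_leq mono //= leqNgt; apply/negP => H.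
by apply: Hn; exists k.
Qed.

Lemma sum_lt n (a b : 'I_n -> nat) i : (forall j, a j <= b j) -> a i < b i ->
  \sum_j a j < \sum_j b j.
Proof.
move=> Hab Hi; rewrite (bigD1 i) //= [X in _ < X](bigD1 i) //=.
by rewrite -addSn; apply: leq_add => //; apply: leq_sum.
Qed.

Section Mod.
Local Open Scope ring_scope.
Variables (R : comPzRingType) (M : lmodType R).

Lemma sub_add (P : M -> Prop) x y : is_submod P -> P x -> P y -> P (x + y).
Proof. by case=> _ H Px Py; have := H 1 x y Px Py; rewrite scale1r. Qed.
Lemma sub_scale (P : M -> Prop) a x : is_submod P -> P x -> P (a *: x).
Proof. by case=> P0 H Px; have := H a x 0 Px P0; rewrite addr0. Qed.
Lemma sub_sub (P : M -> Prop) x y : is_submod P -> P x -> P y -> P (x - y).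
Proof.
move=> HP Px Py; apply: sub_add => //.
by rewrite -scaleN1r; apply: sub_scale.
Qed.

Definition Dd (c : nat -> M -> Prop) (i : nat) (W : M -> Prop) :=
  exists x, W x /\ c i.+1 x /\ ~ c i x.
Definition db (P : Prop) : nat := if excluded_middle_informative P then 1%N else 0%N.

Lemma db_mono (P Q : Prop) : (P -> Q) -> (db P <= db Q)%N.
Proof.
rewrite /db => H; case: excluded_middle_informative => H1;
  case: excluded_middle_informative => H2 //; by case: H2; apply: H.
Qed.

Lemma key n (c : nat -> M -> Prop)
  (Hc0 : forall x, c 0%N x <-> x = 0) (Hcn : forall x, c n x)
  (Hci : forall i, (i < n)%N ->
       [/\ is_submod (c i), is_submod (c i.+1),
           (forall x, c i x -> c i.+1 x),
           (exists x, c i.+1 x /\ ~ c i x) &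
           (forall N : M -> Prop, is_submod N ->
              (forall x, c i x -> N x) -> (forall x, N x -> c i.+1 x) ->
              (forall x, N x -> c i x) \/ (forall x, c i.+1 x -> N x))])
  (V V' : M -> Prop) : is_submod V -> is_submod V' -> (forall x, V x -> V' x) ->
  (forall i, (i < n)%N -> Dd c i V' -> Dd c i V) -> forall x, V' x -> V x.
Proof.
move=> HV HV' HVV' HD.
suff: forall i, (i <= n)%N -> forall x, V' x -> c i x -> V x.
  by move=> H x Vx; apply: (H n).
elim=> [|i IH] Hi x Vx ci.
  have -> : x = 0 by apply/Hc0.
  by case: HV.
have [Ssi Ssi1 Hsub _ Hmax] := Hci i Hi.
case: (classic (Dd c i V')) => HDi.
  have [x0 [V0 [c10 nc0]]] := HD i Hi HDi.
  pose Nn := fun y => exists z r, c i z /\ y = z + r *: x0.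
  have NS : is_submod Nn.
    split.
      exists 0, 0; split; [by case: Ssi|by rewrite scale0r addr0].
    move=> a y1 y2 [z1 [r1 [cz1 ->]]] [z2 [r2 [cz2 ->]]].
    exists (a *: z1 + z2), (a * r1 + r2); split.
      by case: Ssi => _ H; apply: H.
    by rewrite scalerDr scalerDl scalerA addrACA.
  case: (Hmax Nn NS).
  - by move=> z cz; exists z, 0; rewrite scale0r addr0.
  - move=> y [z [r [cz ->]]].
    exact: (sub_add Ssi1 (Hsub _ cz) (sub_scale r Ssi1 c10)).
  - move=> H; exfalso; apply: nc0; apply: H.
    by exists 0, 1; split; [case: Ssi|rewrite add0r scale1r].
  move=> H; have [z [r [cz Ex]]] := H x ci.
  have V'z : V' z.
    have := sub_sub HV' Vx (sub_scale r HV' (HVV' _ V0)).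
    by rewrite Ex addrK.
  have Vz : V z by apply: IH => //; exact: ltnW.
  by rewrite Ex; apply: sub_add Vz (sub_scale r HV V0).
apply: IH => //; first exact: ltnW.
case: (classic (c i x)) => // nc; exfalso; apply: HDi.
by exists x.
Qed.

Lemma fl_dcc : finite_length M -> forall U : nat -> M -> Prop,
  (forall k, is_submod (U k)) -> (forall k x, U k.+1 x -> U k x) ->
  exists N, forall k, (N <= k)%N -> forall x, U N x -> U k x.
Proof.
case=> n [c [Hc0 [Hcn Hci]]] U HU Hdec.
have Hle : forall j k, (j <= k)%N -> forall x, U k x -> U j x.
  move=> j k /subnK <-; elim: (k - j)%N => //= d IH x H.
  by apply: IH; apply: Hdec; rewrite -addSn.
pose l W := (\sum_(i < n) db (Dd c i W))%N.
have Hmon : forall k, (l (U k.+1) <= l (U k))%N.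
  move=> k; apply: leq_sum => i _; apply: db_mono.
  by case=> x [? ?]; exists x; split => //; apply: Hdec.
have [N HN] := stab Hmon.
exists N => k Hk x Ux.
apply: (key Hc0 Hcn Hci (HU k) (HU N) (Hle N k Hk)) => // i Hi HDi.
apply: NNPP => nD.
have : (l (U k) < l (U N))%N.
  apply: (@sum_lt n _ _ (Ordinal Hi)).
    move=> j; apply: db_mono.
    by case=> y [? ?]; exists y; split => //; apply: (Hle N k Hk).
  rewrite /= /db.
  destruct (excluded_middle_informative (Dd c i (U k))) as [h|h]; first by case: nD.
  by destruct (excluded_middle_informative (Dd c i (U N))).
by rewrite (HN k Hk) ltnn.
Qed.

End Mod.

Section Cat.
Local Open Scope ring_scope.
Variables (R : comPzRingType) (C : lincat R).
Local Notation Hm := (Defs.Hom C).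
Local Notation cmp := Defs.comp.

Lemma compDr A B D (g : Hm B D) (f f' : Hm A B) : cmp g (f + f') = cmp g f + cmp g f'.
Proof. by have := comp_linr g 1 f f'; rewrite !scale1r. Qed.
Lemma compDl A B D (f : Hm A B) (g g' : Hm B D) : cmp (g + g') f = cmp g f + cmp g' f.
Proof. by have := comp_linl f 1 g g'; rewrite !scale1r. Qed.
Lemma comp0r A B D (g : Hm B D) : cmp g (0 : Hm A B) = 0.
Proof. by have H := compDr g (0 : Hm A B) 0; rewrite addr0 in H; apply: (addrI (cmp g 0)); rewrite -H addr0. Qed.
Lemma comp0l A B D (f : Hm A B) : cmp (0 : Hm B D) f = 0.
Proof. by have H := compDl f (0 : Hm B D) 0; rewrite addr0 in H; apply: (addrI (cmp 0 f)); rewrite -H addr0. Qed.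
Lemma compNl A B D (f : Hm A B) (g : Hm B D) : cmp (- g) f = - cmp g f.
Proof. by have := comp_linl f (-1) g 0; rewrite addr0 comp0l addr0 !scaleN1r. Qed.
Lemma compBl A B D (f : Hm A B) (g g' : Hm B D) : cmp (g - g') f = cmp g f - cmp g' f.
Proof. by rewrite compDl compNl. Qed.

Lemma kerP A B K (f : Hm A B) (k : Hm K A) : is_kernel f k ->
  forall X (x : Hm X A), cmp f x = 0 -> exists u, cmp k u = x.
Proof. by case=> _ H X x /H [u [Hu _]]; exists u. Qed.
Lemma cokP A B Q (f : Hm A B) (q : Hm B Q) : is_cokernel f q ->
  forall X (x : Hm B X), cmp x f = 0 -> exists u, cmp u q = x.
Proof. by case=> _ H X x /H [u [Hu _]]; exists u. Qed.

Lemma ker_mono A B K (f : Hm A B) (k : Hm K A) : is_kernel f k -> mono k.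
Proof.
case=> Hfk H X u v Huv.
have Hx : cmp f (cmp k u) = 0 by rewrite Defs.compA Hfk comp0l.
have [w [_ Hw]] := H X _ Hx.
by rewrite -(Hw u) // (Hw v).
Qed.
Lemma cok_epi A B Q (f : Hm A B) (q : Hm B Q) : is_cokernel f q -> epi q.
Proof.
case=> Hqf H X u v Huv.
have Hx : cmp (cmp u q) f = 0 by rewrite -Defs.compA Hqf comp0r.
have [w [_ Hw]] := H X _ Hx.
by rewrite -(Hw u) // (Hw v).
Qed.
Lemma mono0 A B (m : Hm A B) X (u : Hm X A) : mono m -> cmp m u = 0 -> u = 0.
Proof. by move=> Hm Hu; apply: Hm; rewrite Hu comp0r. Qed.
Lemma epi0 A B (e : Hm A B) X (u : Hm B X) : epi e -> cmp u e = 0 -> u = 0.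
Proof. by move=> He Hu; apply: He; rewrite Hu comp0l. Qed.

Lemma le_trans A S T U (m : Hm S A) (n : Hm T A) (p : Hm U A) :
  subobj_le m n -> subobj_le n p -> subobj_le m p.
Proof.
case=> u Hu [v Hv]; exists (cmp v u).
by rewrite Defs.compA Hv.
Qed.

Theorem artinian_all (G : Obj C) :
  abelian C -> hom_finite C -> decreasing_intersections C -> weak_generator G ->
  forall A : Obj C, artinian_obj A.
Proof.
move=> [_ [Hbip [Hker [Hcok [Hmk Hek]]]]] Hfin Hint Hgen.
move=> A S m Hmono Hdec.
have [I [i [Hi Hlb Hglb]]] := Hint A S m Hmono Hdec.
have [P [q Hq]] := Hcok _ _ i.
have qepi := cok_epi Hq.
have iker : forall X (x : Hm X A), cmp q x = 0 -> exists u, cmp i u = x.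
  move=> X x Hx.
  have [B0 [f0 Hf0]] := Hmk _ _ i Hi.
  have [w Hw] := cokP Hq (proj1 Hf0).
  apply: (kerP Hf0); by rewrite -Hw -Defs.compA Hx comp0r.
have chain : forall j k, (j <= k)%N -> subobj_le (m k) (m j).
  move=> j k /subnK <-; elim: (k - j)%N => [|d IH].
    by rewrite add0n; exists idm; apply: compm1.
  by rewrite addSn; apply: le_trans IH.
pose h k := cmp q (m k).
pose U k (f : Hm G P) := forall X (x : Hm P X), cmp x (h k) = 0 -> cmp x f = 0.
have HU : forall k, is_submod (U k).
  move=> k; split; first by move=> X x _; rewrite comp0r.
  move=> a f g Hf Hg X x Hx.
  by rewrite comp_linr (Hf _ _ Hx) (Hg _ _ Hx) scaler0 addr0.
have Hdc : forall k f, U k.+1 f -> U k f.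
  move=> k f Hf X x Hx; apply: Hf.
  have [u Hu] := Hdec k.
  by rewrite /h -Hu !Defs.compA -(Defs.compA x q) Hx comp0l.
have [N HN] := fl_dcc (Hfin G P) HU Hdc.
have Uall : forall f, U N f -> forall k, U k f.
  move=> f Hf k; case: (leqP N k) => Hk; first exact: HN.
  move: Hf; move: Hk => /ltnW /subnK <-; elim: (N - k)%N => //= d IH Hf.
  by apply: IH; apply: Hdc; rewrite -addSn.
have Uzero : forall f, U N f -> f = 0.
  move=> f /Uall Hf.
  have [P' [i1 [i2 [p1 [p2 [E1 E2 E3 E4 E5]]]]]] := Hbip A G.
  pose phi := cmp q p1 - cmp f p2.
  have phi1 : cmp phi i1 = q by rewrite compBl -!Defs.compA E1 E4 comp0r subr0 compm1.
  have phiepi : epi phi.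
    move=> X u v Huv; apply: qepi.
    by rewrite -phi1 !Defs.compA Huv.
  have [B [g Hg]] := Hek _ _ phi phiepi.
  have [K [k Hk]] := Hker _ _ phi.
  pose y := cmp p1 k; pose z := cmp p2 k.
  have Hqy : cmp q y = cmp f z.
    apply/eqP; rewrite -subr_eq0; apply/eqP.
    by rewrite /y /z !Defs.compA -compBl (proj1 Hk).
  have Hfz : cmp f z = 0.
    have [Q1 [cy Hcy]] := Hcok _ _ y.
    have [T [n Hn]] := Hker _ _ cy.
    have nmono := ker_mono Hn.
    have [g' Hg'] := kerP Hn (proj1 Hcy).
    have nle : forall kk, subobj_le n (m kk).
      move=> kk; have [D [d Hd]] := Hmk _ _ (m kk) (Hmono kk).
      have [v Hv] := Hlb kk.
      have di : cmp d i = 0 by rewrite -Hv Defs.compA (proj1 Hd) comp0l.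
      have [w Hw] := cokP Hq di.
      have wh : cmp w (h kk) = 0 by rewrite /h Defs.compA Hw (proj1 Hd).
      have dy : cmp d y = 0.
        by rewrite -Hw -Defs.compA Hqy Defs.compA (Hf kk _ w wh) comp0l.
      have [w2 Hw2] := cokP Hcy dy.
      apply: (kerP Hd).
      by rewrite -Hw2 -Defs.compA (proj1 Hn) comp0r.
    have [v Hv] := Hglb T n nmono nle.
    by rewrite -Hqy -Hg' -Hv !Defs.compA (proj1 Hq) !comp0l.
  pose u := cmp f p2.
  have ug : cmp u g = 0.
    have [t Ht] := kerP Hk (proj1 Hg).
    by rewrite -Ht Defs.compA -(Defs.compA f p2 k) Hfz comp0l.
  have [v Hv] := cokP Hg ug.
  have vq : cmp v q = 0.
    by rewrite -phi1 Defs.compA Hv -Defs.compA E4 comp0r.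
  have v0 := epi0 qepi vq.
  have u0 : u = 0 by rewrite -Hv v0 comp0l.
  by rewrite -(compm1 f) -E2 Defs.compA -/u u0 comp0l.
have [Q [c Hc]] := Hcok _ _ (h N).
have [E [e He]] := Hker _ _ c.
have emono := ker_mono He.
have EG : forall g : Hm G E, g = 0.
  move=> g; apply: (mono0 emono); apply: Uzero => X x Hx.
  have [w Hw] := cokP Hc Hx.
  by rewrite -Hw -Defs.compA (Defs.compA c e g) (proj1 He) comp0l comp0r.
have e0 : e = 0.
  have HzE := Hgen E EG.
  exact: (proj1 (HzE P) e 0).
have hN0 : h N = 0.
  have [t Ht] := kerP He (proj1 Hc).
  by rewrite -Ht e0 comp0l.
exists N => k Hk.
have [u Hu] := chain N k Hk.
have hk : cmp q (m k) = 0 by rewrite -Hu Defs.compA -/(h N) hN0 comp0l.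
have [x Hx] := iker _ _ hk.
have [v Hv] := Hlb k.+1.
by exists (cmp v x); rewrite Defs.compA Hv.
Qed.

End Cat.

Theorem mainTheorem3 (R : comPzRingType) (C : lincat R) (G : Obj C) :
  noetherian_ring R ->
  abelian C ->
  (forall A : Obj C, noetherian_obj A) ->
  hom_finite C ->
  decreasing_intersections C ->
  weak_generator G ->
  (forall A : Obj C, artinian_obj A) /\ length_category C.
Proof.
move=> _ Hab Hno Hfin Hint Hgen.
have Ha := artinian_all Hab Hfin Hint Hgen.
by split => // A; split.
Qed.
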